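(* Let $d\ge2$ and run the $d$-particle PushTASEP from a fixed initial configuration $\xi^{(1)}_0<\dots<\xi^{(d)}_0$. Let $W_T=(W^1_T,\dots,W^{d-1}_T)$ with $W^i_T=\xi^{(i+1)}_T-\xi^{(i)}_T-1$ be its gap process, $B_d=\{x\in\mathbb Z^{d-1}_{\ge0}: x_i=0\text{ for some }i\}$, and $N^{(d)}_T=\int_0^T\mathbf 1(W_s\in B_d)\,ds$. Then $\mathbb E[N^{(d)}_T]=\Theta(\sqrt T)$ as $T\to\infty$, and for each $1\le i\le d$, $\mathbb E[\xi^{(i)}_T-\xi^{(i)}_0]=T+O(\sqrt T)$.
   Context: PushTASEP: a continuous-time process of $d$ particles at distinct sites of $\mathbb Z$, each particle carrying an independent rate-$1$ exponential clock. When a particle's clock rings it jumps one site to the right; if that site is occupied, the occupying particle is pushed one site to the right, which in turn pushes any particle to its immediate right, and so on. $\xi^{(1)}_T<\dots<\xi^{(d)}_T$ denote the particle positions at time $T$. $\Theta(\sqrt T)$ means bounded above and below by positive constant multiples of $\sqrt T$ for large $T$. *)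

(* Defs.v *)
From Stdlib Require Import Reals Lra Lia ZArith Arith List.
From Coquelicot Require Import Coquelicot.
Import ListNotations.
Open Scope R_scope.

(* A configuration of the d-particle PushTASEP: particle k (0 <= k < d,
   i.e. the paper's xi^{(k+1)}) sits at site [x k] of Z.  Entries with
   index >= d are irrelevant and never modified. *)
Definition config := nat -> Z.

(* Effect of the clock of particle i ringing (for a strictly increasing
   configuration): particle i jumps one step right and pushes the maximal
   contiguous block of particles immediately to its right.  Particle j >= i
   belongs to that block iff x j - x i = j - i (positions are strictly
   increasing), and then it moves by one; all others stay put. *)
Definition jump (d : nat) (x : config) (i : nat) : config :=
  fun j => if ((i <=? j)%nat && (j <? d)%nat &&
               Z.eqb (x j - x i)%Z (Z.of_nat (j - i)))%bool
           then (x j + 1)%Z else x j.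

(* Expectation of f after n clock rings of the embedded jump chain, where
   each ring belongs to a uniformly chosen particle (d independent rate-1
   clocks = one rate-d clock with a uniform label). *)
Fixpoint expect_steps (d n : nat) (f : config -> R) (x : config) : R :=
  match n with
  | O => f x
  | S m => / INR d *
           fold_right Rplus 0
             (map (fun i => expect_steps d m f (jump d x i)) (seq 0 d))
  end.

(* Expectation E[f(xi_T)] of the continuous-time PushTASEP started from x0:
   the number of rings in [0,T] is Poisson(d T) (uniformization). *)
Definition expect_at (d : nat) (T : R) (f : config -> R) (x0 : config) : R :=
  Series (fun n => exp (- (INR d * T)) * (INR d * T) ^ n / INR (fact n)
                   * expect_steps d n f x0).

(* Gap W^{i+1} = xi^{(i+2)} - xi^{(i+1)} - 1, for 0 <= i < d-1. *)
Definition gap (x : config) (i : nat) : Z := (x (S i) - x i - 1)%Z.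

Definition indB (d : nat) (x : config) : R :=
  if existsb (fun i => Z.eqb (gap x i) 0%Z) (seq 0 (d - 1)) then 1 else 0.

(* E[N^{(d)}_T] = E[int_0^T 1(W_s in B_d) ds] = int_0^T P(W_s in B_d) ds
   (Tonelli). *)
Definition expected_occupation (d : nat) (T : R) (x0 : config) : R :=
  RInt (fun s => expect_at d s (indB d) x0) 0 T.

Definition expected_displacement (d : nat) (T : R) (x0 : config) (i : nat) : R :=
  expect_at d T (fun x => IZR (x i - x0 i)%Z) x0.

(* Main.v *)
Require Import Defs.
From Stdlib Require Import Reals ZArith.
From Coquelicot Require Import Coquelicot.
Open Scope R_scope.
From Stdlib Require Import Lra Lia Arith List.

Definition Gr (a : nat -> R) := exists M K, 1 <= K /\ forall n, Rabs (a n) <= M * K ^ n.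
Definition bb (a : nat -> R) n := a n / INR (fact n).

Lemma fact_pos n : 0 < INR (fact n).
Proof. apply lt_0_INR. apply lt_O_fact. Qed.

Lemma exp_series x : ex_series (fun n => x ^ n / INR (fact n)).
Proof.
  eapply ex_series_ext; [|exists (exp x); exact (is_exp_Reals x)].
  intros n. simpl. rewrite pow_n_pow. unfold scal; simpl. unfold mult; simpl.
  unfold Rdiv. ring.
Qed.

Lemma Gr_CV a : Gr a -> forall r, CV_disk (bb a) r.
Proof.
  intros [M [K [HK Hb]]] r. unfold CV_disk.
  apply (@ex_series_le R_AbsRing R_CompleteNormedModule _ (fun n => M * ((K * Rabs r) ^ n / INR (fact n)))).
  - intros n. unfold norm; simpl. unfold abs; simpl. rewrite Rabs_Rabsolu.
    unfold bb. rewrite Rabs_mult. unfold Rdiv. rewrite Rabs_mult.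
    rewrite (Rabs_right (/ INR (fact n))) by (apply Rle_ge, Rlt_le, Rinv_0_lt_compat, fact_pos).
    rewrite <- RPow_abs. rewrite Rpow_mult_distr.
    specialize (Hb n). pose proof (fact_pos n).
    assert (0 <= / INR (fact n)) by (apply Rlt_le, Rinv_0_lt_compat; auto).
    assert (0 <= Rabs r ^ n) by (apply pow_le, Rabs_pos).
    replace (M * (K ^ n * Rabs r ^ n * / INR (fact n))) with ((M * K^n) * (/ INR (fact n) * Rabs r ^ n)) by ring.
    rewrite Rmult_assoc. apply Rmult_le_compat_r; [|exact Hb].
    apply Rmult_le_pos; auto.
  - apply (ex_series_scal_l M (fun n => (K * Rabs r) ^ n / INR (fact n))). apply exp_series.
Qed.

Lemma Gr_rad a : Gr a -> forall x, Rbar_lt (Rabs x) (CV_radius (bb a)).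
Proof.
  intros Ha x. unfold CV_radius.
  pose proof (proj1 (Lub_Rbar_correct (CV_disk (bb a))) (Rabs x + 1) (Gr_CV a Ha _)) as H.
  destruct (Lub_Rbar (CV_disk (bb a))) as [l| |]; simpl in *; try tauto; lra.
Qed.

Lemma Gr_ex a : Gr a -> forall x, ex_pseries (bb a) x.
Proof. intros Ha x. apply CV_radius_inside, Gr_rad, Ha. Qed.

Definition pw (d : nat) (t : R) (n : nat) := exp (- (INR d * t)) * (INR d * t) ^ n / INR (fact n).
Definition Fp (d : nat) (a : nat -> R) (t : R) := Series (fun n => pw d t n * a n).

Lemma Fp_PS d a t : Fp d a t = exp (- (INR d * t)) * PSeries (bb a) (INR d * t).
Proof.
  unfold Fp, PSeries. rewrite <- Series_scal_l. apply Series_ext. intros n.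
  unfold pw, bb. unfold Rdiv. ring.
Qed.

Lemma Fp_ex d a t : Gr a -> ex_series (fun n => pw d t n * a n).
Proof.
  intros Ha. pose proof (Gr_ex a Ha (INR d * t)) as H. unfold ex_pseries in H.
  apply (ex_series_scal_l (exp (- (INR d * t)))) in H.
  eapply ex_series_ext; [|exact H]. intros n. simpl.
  rewrite pow_n_pow. unfold scal; simpl. unfold mult; simpl. unfold pw, bb, Rdiv. ring.
Qed.

Lemma Fp_0 d a : Fp d a 0 = a 0%nat.
Proof.
  rewrite Fp_PS. rewrite Rmult_0_r, Ropp_0, exp_0, PSeries_0. unfold bb. simpl. field.
Qed.

Definition Dl (a : nat -> R) n := a (S n) - a n.

Lemma Fp_deriv d a t : Gr a ->
  is_derive (Fp d a) t (INR d * Fp d (Dl a) t).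
Proof.
  intros Ha. set (l := INR d).
  assert (H1 : is_derive (fun t => exp (- (l * t))) t (- l * exp (- (l * t)))).
  { auto_derive; auto. ring. }
  assert (H2 : is_derive (fun t => PSeries (bb a) (l * t)) t (l * PSeries (PS_derive (bb a)) (l * t))).
  { apply (is_derive_comp (PSeries (bb a)) (fun t => l * t) t).
    - apply is_derive_PSeries, Gr_rad, Ha.
    - auto_derive; auto. ring. }
  pose proof (is_derive_mult _ _ t _ _ H1 H2 (fun n m => Rmult_comm n m)) as H3.
  eapply is_derive_ext. { intros u. symmetry. apply Fp_PS. }
  replace (l * Fp d (Dl a) t) with
    (plus (mult (- l * exp (- (l * t))) (PSeries (bb a) (l * t)))
          (mult (exp (- (l * t))) (l * PSeries (PS_derive (bb a)) (l * t)))).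
  exact H3.
  rewrite Fp_PS. fold l.
  assert (E : PSeries (bb (Dl a)) (l * t) = PSeries (PS_derive (bb a)) (l * t) - PSeries (bb a) (l * t)).
  { rewrite <- PSeries_minus.
    - apply PSeries_ext. intros n. unfold PS_minus, PS_derive, bb, Dl.
      rewrite fact_simpl, mult_INR. pose proof (fact_pos n).
      assert (INR (S n) <> 0) by (apply not_0_INR; lia).
      unfold minus, plus, opp; simpl. pose proof (pos_INR n). field. repeat split; try lra. exact H0.
    - apply ex_pseries_derive, Gr_rad, Ha.
    - apply Gr_ex, Ha. }
  rewrite E. unfold plus, mult; simpl. ring.
Qed.

Lemma Gr_Dl a : Gr a -> Gr (Dl a).
Proof.
  intros [M [K [HK Hb]]]. exists (2 * M * K), K. split; auto. intros n.
  unfold Dl. eapply Rle_trans. apply Rabs_triang. rewrite Rabs_Ropp.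
  pose proof (Hb (S n)). pose proof (Hb n). simpl in *.
  assert (0 <= K ^ n) by (apply pow_le; lra).
  assert (0 <= M) by (pose proof (Hb 0%nat); pose proof (Rabs_pos (a 0%nat)); simpl in *; lra).
  assert (0 <= M * K ^ n * (K - 1)) by (apply Rmult_le_pos; [apply Rmult_le_pos|]; lra).
  nra.
Qed.

Lemma Gr_plus a b : Gr a -> Gr b -> Gr (fun n => a n + b n).
Proof.
  intros [M1 [K1 [HK1 Hb1]]] [M2 [K2 [HK2 Hb2]]].
  exists (Rabs M1 + Rabs M2), (Rmax K1 K2). split. { eapply Rle_trans; [|apply Rmax_l]; auto. }
  intros n. eapply Rle_trans. apply Rabs_triang.
  pose proof (Hb1 n). pose proof (Hb2 n).
  assert (K1 ^ n <= Rmax K1 K2 ^ n) by (apply pow_incr; split; [lra|apply Rmax_l]).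
  assert (K2 ^ n <= Rmax K1 K2 ^ n) by (apply pow_incr; split; [lra|apply Rmax_r]).
  assert (0 <= K1 ^ n) by (apply pow_le; lra).
  assert (0 <= K2 ^ n) by (apply pow_le; lra).
  pose proof (Rle_abs M1). pose proof (Rle_abs M2). pose proof (Rabs_pos M1). pose proof (Rabs_pos M2).
  nra.
Qed.

Lemma Gr_scal c a : Gr a -> Gr (fun n => c * a n).
Proof.
  intros [M [K [HK Hb]]]. exists (Rabs c * M), K. split; auto. intros n.
  rewrite Rabs_mult. rewrite Rmult_assoc. apply Rmult_le_compat_l; auto. apply Rabs_pos.
Qed.

Lemma Gr_const c : Gr (fun _ => c).
Proof. exists (Rabs c), 1. split. lra. intros n. rewrite pow1. lra. Qed.

Lemma Fp_plus d a b t : Gr a -> Gr b -> Fp d (fun n => a n + b n) t = Fp d a t + Fp d b t.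
Proof.
  intros Ha Hb. unfold Fp. rewrite <- Series_plus by (apply Fp_ex; auto).
  apply Series_ext. intros n. ring.
Qed.

Lemma Fp_scal d c a t : Fp d (fun n => c * a n) t = c * Fp d a t.
Proof.
  unfold Fp. rewrite <- Series_scal_l. apply Series_ext. intros n. ring.
Qed.

Lemma Fp_const d c t : Fp d (fun _ => c) t = c.
Proof.
  rewrite Fp_PS.
  assert (PSeries (bb (fun _ => c)) (INR d * t) = c * exp (INR d * t)).
  { rewrite <- (is_pseries_unique _ _ _ (is_exp_Reals (INR d * t))).
    rewrite <- PSeries_scal. apply PSeries_ext. intros n. unfold PS_scal, bb. unfold scal; simpl.
    unfold mult; simpl. unfold Rdiv. ring. }
  rewrite H. rewrite <- Rmult_assoc, (Rmult_comm _ c), Rmult_assoc, <- exp_plus.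
  replace (- (INR d * t) + INR d * t) with 0 by ring. rewrite exp_0. ring.
Qed.

Lemma pw_pos d t n : 0 <= t -> 0 <= pw d t n.
Proof.
  intros Ht. unfold pw. pose proof (fact_pos n). pose proof (pos_INR d).
  apply Rmult_le_pos. apply Rmult_le_pos. apply Rlt_le, exp_pos.
  apply pow_le. nra. apply Rlt_le, Rinv_0_lt_compat; auto.
Qed.

Lemma Fp_le d a b t : Gr a -> Gr b -> (forall n, a n <= b n) -> 0 <= t -> Fp d a t <= Fp d b t.
Proof.
  intros Ha Hb Hab Ht.
  assert (Fp d b t - Fp d a t = Fp d (fun n => b n + (-1) * a n) t) as E.
  { rewrite Fp_plus; auto. rewrite Fp_scal. ring. apply Gr_scal; auto. }
  assert (0 <= Fp d (fun n => b n + (-1) * a n) t).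
  { unfold Fp. replace 0 with (Series (fun _ : nat => 0)).
    apply Series_le. intros n. split. lra. pose proof (pw_pos d t n Ht). pose proof (Hab n). nra.
    apply Fp_ex. apply Gr_plus; auto. apply Gr_scal; auto.
    transitivity (Fp d (fun _ => 0) t); [|apply Fp_const]. unfold Fp. apply Series_ext. intros; ring. }
  lra.
Qed.

Lemma continuity_of_deriv (F : R -> R) x df : is_derive F x df -> continuity_pt F x.
Proof.
  intros H. apply continuity_pt_filterlim. apply (ex_derive_continuous F x). exists df; exact H.
Qed.

Lemma deriv_nonpos (F dF : R -> R) T : 0 <= T -> (forall t, is_derive F t (dF t)) ->
  (forall t, 0 <= t <= T -> dF t <= 0) -> F T <= F 0.
Proof.
  intros HT HD Hn.
  destruct (MVT_gen F 0 T dF) as [c [Hc E]].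
  - intros x _. apply HD.
  - intros x _. eapply continuity_of_deriv. apply HD.
  - rewrite Rmin_left in Hc by lra. rewrite Rmax_right in Hc by lra.
    pose proof (Hn c Hc). assert (F T - F 0 <= 0) by (rewrite E; nra). lra.
Qed.

Lemma RInt_deriv (F dF : R -> R) T : 0 <= T -> (forall t, is_derive F t (dF t)) ->
  (forall t, continuous dF t) -> RInt dF 0 T = F T - F 0.
Proof.
  intros HT HD HC. apply is_RInt_unique. apply (is_RInt_derive F dF 0 T).
  intros; apply HD. intros; apply HC.
Qed.


Definition sm (n : nat) (g : nat -> R) := fold_right Rplus 0 (map g (seq 0 n)).

Lemma fold_plus_c l c : fold_right Rplus c l = fold_right Rplus 0 l + c.
Proof. induction l; simpl. ring. rewrite IHl. ring. Qed.

Lemma sm_0 g : sm 0 g = 0.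
Proof. reflexivity. Qed.

Lemma sm_S n g : sm (S n) g = sm n g + g n.
Proof.
  unfold sm. rewrite seq_S, map_app, fold_right_app. simpl. rewrite fold_plus_c. ring.
Qed.

Lemma sm_ext n g h : (forall i, (i < n)%nat -> g i = h i) -> sm n g = sm n h.
Proof.
  induction n; intros H. reflexivity. rewrite !sm_S. rewrite IHn by (intros; apply H; lia).
  rewrite H by lia. reflexivity.
Qed.

Lemma sm_le n g h : (forall i, (i < n)%nat -> g i <= h i) -> sm n g <= sm n h.
Proof.
  induction n; intros H. rewrite !sm_0; lra. rewrite !sm_S.
  pose proof (IHn (fun i Hi => H i ltac:(lia))). pose proof (H n ltac:(lia)). lra.
Qed.

Lemma sm_plus n g h : sm n (fun i => g i + h i) = sm n g + sm n h.
Proof. induction n. rewrite !sm_0; ring. rewrite !sm_S, IHn. ring. Qed.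

Lemma sm_scal n c g : sm n (fun i => c * g i) = c * sm n g.
Proof. induction n. rewrite !sm_0; ring. rewrite !sm_S, IHn. ring. Qed.

Lemma sm_const n c : sm n (fun _ => c) = INR n * c.
Proof. induction n. rewrite sm_0; simpl; ring. rewrite sm_S, IHn, S_INR. ring. Qed.

Lemma sm_nonneg n g : (forall i, (i < n)%nat -> 0 <= g i) -> 0 <= sm n g.
Proof.
  intros H. replace 0 with (sm n (fun _ => 0)). apply sm_le; auto.
  rewrite sm_const; ring.
Qed.

Lemma sm_ge_pt n g a : (forall i, (i < n)%nat -> 0 <= g i) -> (a < n)%nat -> g a <= sm n g.
Proof.
  induction n; intros H Ha. lia. rewrite sm_S.
  destruct (Nat.eq_dec a n) as [->|Hne].
  - pose proof (sm_nonneg n g (fun i Hi => H i ltac:(lia))). lra.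
  - pose proof (IHn (fun i Hi => H i ltac:(lia)) ltac:(lia)). pose proof (H n ltac:(lia)). lra.
Qed.

Lemma sm_ge_2 n g a : (forall i, (i < n)%nat -> 0 <= g i) -> (S a < n)%nat -> g a + g (S a) <= sm n g.
Proof.
  induction n; intros H Ha. lia. rewrite sm_S.
  destruct (Nat.eq_dec (S a) n) as [<-|Hne].
  - pose proof (sm_ge_pt (S a) g a (fun i Hi => H i ltac:(lia)) ltac:(lia)). lra.
  - pose proof (IHn (fun i Hi => H i ltac:(lia)) ltac:(lia)). pose proof (H n ltac:(lia)). lra.
Qed.

Lemma sm_ge_plus1 n h m : (forall i, (i < n)%nat -> 1 <= h i) -> (m < n)%nat -> 2 <= h m ->
  INR n + 1 <= sm n h.
Proof.
  induction n; intros H Hm H2. lia. rewrite sm_S, S_INR.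
  destruct (Nat.eq_dec m n) as [->|Hne].
  - assert (INR n * 1 <= sm n h). { rewrite <- sm_const. apply sm_le. intros; apply H; lia. }
    lra.
  - pose proof (IHn (fun i Hi => H i ltac:(lia)) ltac:(lia) H2). pose proof (H n ltac:(lia)). lra.
Qed.

Lemma sm_cut n k g : (forall i, (k <= i)%nat -> g i = 0) -> (k <= n)%nat -> sm n g = sm k g.
Proof.
  induction n; intros H Hk. assert (k = 0%nat) by lia. subst; reflexivity.
  destruct (Nat.eq_dec k (S n)) as [->|Hne]. reflexivity.
  rewrite sm_S, H by lia. rewrite IHn by (auto; lia). ring.
Qed.

Definition mv (d : nat) (y : config) (i j : nat) : bool :=
  ((i <=? j)%nat && (j <? d)%nat && Z.eqb (y j - y i)%Z (Z.of_nat (j - i)))%bool.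

Lemma mv_spec d y i j : mv d y i j = true <->
  ((i <= j)%nat /\ (j < d)%nat /\ (y j - y i = Z.of_nat (j - i))%Z).
Proof.
  unfold mv. rewrite !Bool.andb_true_iff, Nat.leb_le, Nat.ltb_lt, Z.eqb_eq. tauto.
Qed.

Lemma jump_val d y i j : jump d y i j = (y j + if mv d y i j then 1 else 0)%Z.
Proof. unfold jump, mv. destruct (_ && _ && _)%bool; lia. Qed.

Definition valid (d : nat) (y : config) := forall k, (S k < d)%nat -> (y k < y (S k))%Z.

Lemma jump_valid d y i : valid d y -> valid d (jump d y i).
Proof.
  intros Hv k Hk. rewrite !jump_val. specialize (Hv k Hk).
  destruct (mv d y i k) eqn:E1, (mv d y i (S k)) eqn:E2; try lia.
  apply mv_spec in E1. destruct E1 as [H1 [H2 H3]].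
  destruct (Z.eq_dec (y (S k)) (y k + 1)) as [He|He]; [|lia].
  assert (mv d y i (S k) = true) by (apply mv_spec; repeat split; lia). congruence.
Qed.

Definition reach (x y : config) (n : nat) := forall i, (x i <= y i <= x i + Z.of_nat n)%Z.

Lemma es_S d n f x : expect_steps d (S n) f x = / INR d * sm d (fun i => expect_steps d n f (jump d x i)).
Proof. reflexivity. Qed.

Lemma es_ext d n f g x : (forall y, f y = g y) -> expect_steps d n f x = expect_steps d n g x.
Proof.
  revert x; induction n; intros x H. simpl; auto.
  rewrite !es_S. f_equal. apply sm_ext. intros; auto.
Qed.

Lemma es_plus d n f g x : expect_steps d n (fun y => f y + g y) x = expect_steps d n f x + expect_steps d n g x.
Proof.
  revert x; induction n; intros x. reflexivity.
  rewrite !es_S. rewrite (sm_ext _ _ (fun i => expect_steps d n f (jump d x i) + expect_steps d n g (jump d x i))).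
  rewrite sm_plus. ring. intros; auto.
Qed.

Lemma es_scal d n c f x : expect_steps d n (fun y => c * f y) x = c * expect_steps d n f x.
Proof.
  revert x; induction n; intros x. reflexivity.
  rewrite !es_S. rewrite (sm_ext _ _ (fun i => c * expect_steps d n f (jump d x i))).
  rewrite sm_scal. ring. intros; auto.
Qed.

Lemma es_const d n c x : (0 < d)%nat -> expect_steps d n (fun _ => c) x = c.
Proof.
  intros Hd. revert x; induction n; intros x. reflexivity.
  rewrite !es_S. rewrite (sm_ext _ _ (fun i => c)). rewrite sm_const. field.
  apply not_0_INR; lia. intros; auto.
Qed.

Lemma es_le d n f g x : (0 < d)%nat -> (forall y, valid d y -> f y <= g y) -> valid d x ->
  expect_steps d n f x <= expect_steps d n g x.
Proof.
  intros Hd H. revert x; induction n; intros x Hx. simpl; auto.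
  rewrite !es_S. apply Rmult_le_compat_l. apply Rlt_le, Rinv_0_lt_compat, lt_0_INR; lia.
  apply sm_le. intros. apply IHn. apply jump_valid; auto.
Qed.

Lemma reach_jump d x y i n : reach (jump d x i) y n -> reach x y (S n).
Proof.
  intros H j. specialize (H j). rewrite jump_val in H. destruct (mv d x i j); lia.
Qed.

Lemma es_bound d n f x B : (0 < d)%nat -> (forall y, reach x y n -> Rabs (f y) <= B) ->
  Rabs (expect_steps d n f x) <= B.
Proof.
  intros Hd. revert x; induction n; intros x H.
  - simpl. apply H. intros i; lia.
  - rewrite es_S. assert (0 < INR d) by (apply lt_0_INR; lia).
    assert (HB : forall i, Rabs (expect_steps d n f (jump d x i)) <= B).
    { intros i. apply IHn. intros y Hy. apply H. eapply reach_jump; eauto. }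
    assert (sm d (fun i => expect_steps d n f (jump d x i)) <= INR d * B).
    { rewrite <- sm_const. apply sm_le. intros i _. specialize (HB i). apply Rabs_le_between in HB. lra. }
    assert (INR d * (- B) <= sm d (fun i => expect_steps d n f (jump d x i))).
    { rewrite <- sm_const. apply sm_le. intros i _. specialize (HB i). apply Rabs_le_between in HB. lra. }
    apply Rabs_le. split.
    + apply (Rmult_le_reg_l (INR d)); auto. rewrite <- Rmult_assoc, Rinv_r by lra. lra.
    + apply (Rmult_le_reg_l (INR d)); auto. rewrite <- Rmult_assoc, Rinv_r by lra. lra.
Qed.

Definition GrF (x0 : config) (f : config -> R) :=
  exists M K, 1 <= K /\ forall n y, reach x0 y n -> Rabs (f y) <= M * K ^ n.

Lemma GrF_a d x0 f : (0 < d)%nat -> GrF x0 f -> Gr (fun n => expect_steps d n f x0).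
Proof.
  intros Hd [M [K [HK H]]]. exists M, K. split; auto. intros n. apply es_bound; auto.
Qed.

Lemma GrF_M x0 f M K : (forall n y, reach x0 y n -> Rabs (f y) <= M * K ^ n) -> 0 <= M.
Proof.
  intros H. specialize (H 0%nat x0 ltac:(intros i; lia)). simpl in H.
  pose proof (Rabs_pos (f x0)). lra.
Qed.

Lemma GrF_plus x0 f g : GrF x0 f -> GrF x0 g -> GrF x0 (fun y => f y + g y).
Proof.
  intros [M1 [K1 [HK1 Hb1]]] [M2 [K2 [HK2 Hb2]]].
  pose proof (GrF_M _ _ _ _ Hb1). pose proof (GrF_M _ _ _ _ Hb2).
  exists (M1 + M2), (Rmax K1 K2). split. { eapply Rle_trans; [|apply Rmax_l]; auto. }
  intros n y Hy. eapply Rle_trans. apply Rabs_triang.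
  pose proof (Hb1 n y Hy). pose proof (Hb2 n y Hy).
  assert (K1 ^ n <= Rmax K1 K2 ^ n) by (apply pow_incr; split; [lra|apply Rmax_l]).
  assert (K2 ^ n <= Rmax K1 K2 ^ n) by (apply pow_incr; split; [lra|apply Rmax_r]).
  nra.
Qed.

Lemma GrF_mult x0 f g : GrF x0 f -> GrF x0 g -> GrF x0 (fun y => f y * g y).
Proof.
  intros [M1 [K1 [HK1 Hb1]]] [M2 [K2 [HK2 Hb2]]].
  pose proof (GrF_M _ _ _ _ Hb1). pose proof (GrF_M _ _ _ _ Hb2).
  exists (M1 * M2), (K1 * K2). split. nra.
  intros n y Hy. rewrite Rabs_mult, Rpow_mult_distr.
  pose proof (Hb1 n y Hy). pose proof (Hb2 n y Hy).
  replace (M1 * M2 * (K1 ^ n * K2 ^ n)) with ((M1 * K1 ^ n) * (M2 * K2 ^ n)) by ring.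
  apply Rmult_le_compat; auto; apply Rabs_pos.
Qed.

Lemma GrF_const x0 c : GrF x0 (fun _ => c).
Proof. exists (Rabs c), 1. split. lra. intros. rewrite pow1. lra. Qed.

Lemma pow2_ge n : INR n + 1 <= 2 ^ n.
Proof. induction n. simpl; lra. rewrite S_INR. simpl. pose proof (pos_INR n). lra. Qed.

Lemma GrF_pos x0 k : GrF x0 (fun y => IZR (y k)).
Proof.
  exists (Rabs (IZR (x0 k)) + 1), 2. split. lra. intros n y Hy.
  specialize (Hy k). assert (IZR (x0 k) <= IZR (y k) <= IZR (x0 k) + INR n).
  { rewrite INR_IZR_INZ, <- plus_IZR. split; apply IZR_le; lia. }
  pose proof (pow2_ge n). pose proof (pos_INR n).
  pose proof (Rle_abs (IZR (x0 k))). pose proof (Rabs_pos (IZR (x0 k))).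
  pose proof (proj1 (Rabs_le_between (IZR (x0 k)) (Rabs (IZR (x0 k)))) (Rle_refl _)).
  assert ((Rabs (IZR (x0 k)) + 1) * (INR n + 1) <= (Rabs (IZR (x0 k)) + 1) * 2 ^ n)
    by (apply Rmult_le_compat_l; lra).
  assert (0 <= Rabs (IZR (x0 k)) * INR n) by (apply Rmult_le_pos; lra).
  apply Rabs_le. split; nra.
Qed.

Lemma GrF_ext x0 f g : (forall y, f y = g y) -> GrF x0 f -> GrF x0 g.
Proof. intros E [M [K [HK H]]]. exists M, K. split; auto. intros n y Hy. rewrite <- E. auto. Qed.

Lemma Gr_ext a b : (forall n, a n = b n) -> Gr a -> Gr b.
Proof. intros E [M [K [HK H]]]. exists M, K. split; auto. intros n. rewrite <- E. auto. Qed.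

Definition Pf (d : nat) (f : config -> R) (y : config) := / INR d * sm d (fun i => f (jump d y i)).

Lemma markov d n f x : expect_steps d (S n) f x = expect_steps d n (Pf d f) x.
Proof.
  revert x; induction n; intros x. reflexivity.
  rewrite es_S. rewrite (es_S d n). f_equal. apply sm_ext. intros i _. apply IHn.
Qed.

Definition Lg (d : nat) (f : config -> R) (y : config) := sm d (fun i => f (jump d y i) - f y).

Lemma Dl_es d f x : (0 < d)%nat ->
  forall n, Dl (fun n => expect_steps d n f x) n = / INR d * expect_steps d n (Lg d f) x.
Proof.
  intros Hd n. unfold Dl. rewrite markov. rewrite <- es_scal.
  assert (0 < INR d) by (apply lt_0_INR; lia).
  replace (expect_steps d n (Pf d f) x - expect_steps d n f x) with
    (expect_steps d n (fun y => Pf d f y + (-1) * f y) x) by (rewrite es_plus, es_scal; ring).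
  apply es_ext. intros y. unfold Pf, Lg.
  rewrite (sm_ext _ (fun i => f (jump d y i) - f y) (fun i => f (jump d y i) + (-1) * f y)) by (intros; ring).
  rewrite sm_plus, sm_const. field. lra.
Qed.

Definition E (d : nat) (x0 : config) (f : config -> R) (t : R) := Fp d (fun n => expect_steps d n f x0) t.
Definition GA (d : nat) (x0 : config) (f : config -> R) := Gr (fun n => expect_steps d n f x0).

Lemma Fp_ext d a b t : (forall n, a n = b n) -> Fp d a t = Fp d b t.
Proof. intros H. unfold Fp. apply Series_ext. intros n. rewrite H. reflexivity. Qed.

Lemma GA_L d x0 f : (0 < d)%nat -> GA d x0 f -> GA d x0 (Lg d f).
Proof.
  intros Hd H. unfold GA. apply (Gr_ext (fun n => INR d * Dl (fun n => expect_steps d n f x0) n)).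
  - intros n. rewrite Dl_es by auto. field. apply not_0_INR; lia.
  - apply Gr_scal, Gr_Dl, H.
Qed.

Lemma E_deriv d x0 f t : (0 < d)%nat -> GA d x0 f -> is_derive (E d x0 f) t (E d x0 (Lg d f) t).
Proof.
  intros Hd H. unfold E.
  replace (Fp d (fun n => expect_steps d n (Lg d f) x0) t) with
     (INR d * Fp d (Dl (fun n => expect_steps d n f x0)) t). exact (Fp_deriv d _ t H).
  rewrite (Fp_ext d _ (fun n => / INR d * expect_steps d n (Lg d f) x0)) by (apply Dl_es; auto).
  rewrite Fp_scal. field. apply not_0_INR; lia.
Qed.

Lemma E_0 d x0 f : E d x0 f 0 = f x0.
Proof. unfold E. rewrite Fp_0. reflexivity. Qed.

Lemma E_plus d x0 f g t : GA d x0 f -> GA d x0 g ->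
  E d x0 (fun y => f y + g y) t = E d x0 f t + E d x0 g t.
Proof.
  intros Hf Hg. unfold E. rewrite <- Fp_plus by auto. apply Fp_ext. intros; apply es_plus.
Qed.

Lemma E_scal d x0 c f t : E d x0 (fun y => c * f y) t = c * E d x0 f t.
Proof. unfold E. rewrite <- Fp_scal. apply Fp_ext. intros; apply es_scal. Qed.

Lemma E_const d x0 c t : (0 < d)%nat -> E d x0 (fun _ => c) t = c.
Proof. intros Hd. unfold E. rewrite (Fp_ext d _ (fun _ => c)). apply Fp_const. intros; apply es_const; auto. Qed.

Lemma E_le d x0 f g t : (0 < d)%nat -> GA d x0 f -> GA d x0 g -> (forall y, valid d y -> f y <= g y) ->
  valid d x0 -> 0 <= t -> E d x0 f t <= E d x0 g t.
Proof.
  intros Hd Hf Hg H Hv Ht. unfold E. apply Fp_le; auto. intros n. apply es_le; auto.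
Qed.

Lemma GA_F d x0 f : (0 < d)%nat -> GrF x0 f -> GA d x0 f.
Proof. intros; apply GrF_a; auto. Qed.

Lemma GA_plus d x0 f g : GA d x0 f -> GA d x0 g -> GA d x0 (fun y => f y + g y).
Proof. intros Hf Hg. apply (Gr_ext (fun n => expect_steps d n f x0 + expect_steps d n g x0)).
  intros; symmetry; apply es_plus. apply Gr_plus; auto. Qed.

Lemma GA_scal d x0 c f : GA d x0 f -> GA d x0 (fun y => c * f y).
Proof. intros Hf. apply (Gr_ext (fun n => c * expect_steps d n f x0)).
  intros; symmetry; apply es_scal. apply Gr_scal; auto. Qed.

Lemma GA_const d x0 c : (0 < d)%nat -> GA d x0 (fun _ => c).
Proof. intros. apply GA_F; auto. apply GrF_const. Qed.

Lemma E_cont d x0 f t : GA d x0 f -> continuous (E d x0 f) t.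
Proof. intros H. exact (@ex_derive_continuous R_AbsRing R_NormedModule (E d x0 f) t (ex_intro _ _ (Fp_deriv d _ t H))). Qed.

Lemma E_grow_le d x0 f c T : (0 < d)%nat -> GA d x0 f -> valid d x0 -> 0 <= T ->
  (forall y, valid d y -> Lg d f y <= c) -> E d x0 f T <= f x0 + c * T.
Proof.
  intros Hd Hf Hv HT H.
  pose proof (deriv_nonpos (fun t => E d x0 f t - c * t) (fun t => E d x0 (Lg d f) t - c) T HT) as K.
  simpl in K. rewrite E_0 in K. 
  assert (E d x0 f T - c * T <= f x0 - c * 0). apply K.
  - intros t. apply (is_derive_minus (E d x0 f) (fun t => c * t)). apply E_deriv; auto.
    auto_derive; auto. ring.
  - intros t Ht. rewrite <- (E_const d x0 c t Hd). 
    assert (E d x0 (Lg d f) t <= E d x0 (fun _ => c) t). apply E_le; auto. apply GA_L; auto. apply GA_const; auto.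
    lra.
  - lra.
  - lra.
Qed.

Lemma E_grow_ge d x0 f c T : (0 < d)%nat -> GA d x0 f -> valid d x0 -> 0 <= T ->
  (forall y, valid d y -> c <= Lg d f y) -> f x0 + c * T <= E d x0 f T.
Proof.
  intros Hd Hf Hv HT H.
  pose proof (deriv_nonpos (fun t => c * t - E d x0 f t) (fun t => c - E d x0 (Lg d f) t) T HT) as K.
  simpl in K. rewrite E_0 in K. 
  assert (c * T - E d x0 f T <= c * 0 - f x0). apply K.
  - intros t. apply (is_derive_minus (fun t => c * t) (E d x0 f)). 
    auto_derive; auto. ring. apply E_deriv; auto.
  - intros t Ht. rewrite <- (E_const d x0 c t Hd). 
    assert (E d x0 (fun _ => c) t <= E d x0 (Lg d f) t). apply E_le; auto. apply GA_const; auto. apply GA_L; auto.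
    lra.
  - lra.
  - lra.
Qed.


Definition ind (b : bool) : R := if b then 1 else 0.
Definition posn (k : nat) (y : config) : R := IZR (y k).
Definition Wf (m : nat) (y : config) : R := IZR (gap y m).

Lemma ind_01 b : 0 <= ind b <= 1.
Proof. destruct b; simpl; lra. Qed.

Lemma jump_diff d y i j : IZR (jump d y i j) - IZR (y j) = ind (mv d y i j).
Proof. rewrite jump_val, plus_IZR. unfold ind. destruct (mv d y i j); simpl; ring. Qed.

Lemma W_jump d y i m : Wf m (jump d y i) = Wf m y + ind (mv d y i (S m)) - ind (mv d y i m).
Proof.
  unfold Wf, gap. rewrite !jump_val. unfold ind.
  destruct (mv d y i (S m)), (mv d y i m); rewrite !minus_IZR, ?plus_IZR; ring.
Qed.

Lemma mv_gt d y i j : (j < i)%nat -> mv d y i j = false.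
Proof. intros H. destruct (mv d y i j) eqn:E; auto. apply mv_spec in E. lia. Qed.

Lemma mv_refl d y k : (k < d)%nat -> mv d y k k = true.
Proof. intros. apply mv_spec. replace (k - k)%nat with 0%nat by lia. repeat split; lia. Qed.

Lemma mv_next d y m : (S m < d)%nat -> mv d y m (S m) = Z.eqb (gap y m) 0.
Proof.
  intros H. unfold gap. destruct (mv d y m (S m)) eqn:E.
  - apply mv_spec in E. symmetry. apply Z.eqb_eq. replace (S m - m)%nat with 1%nat in E by lia. lia.
  - symmetry. apply Z.eqb_neq. intros Hc. 
    assert (mv d y m (S m) = true) by (apply mv_spec; replace (S m - m)%nat with 1%nat by lia; repeat split; lia).
    congruence.
Qed.

Lemma L1 d y : (0 < d)%nat -> Lg d (posn 0) y = 1.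
Proof.
  intros Hd. unfold Lg, posn.
  rewrite (sm_ext _ _ (fun i => ind (mv d y i 0))) by (intros; apply jump_diff).
  rewrite (sm_cut d 1). rewrite sm_S, sm_0. rewrite mv_refl by auto. simpl. ring.
  intros i Hi. rewrite mv_gt by lia. reflexivity. lia.
Qed.

Lemma L2 d y k : (k < d)%nat -> 1 <= Lg d (posn k) y.
Proof.
  intros Hk. unfold Lg, posn.
  rewrite (sm_ext _ _ (fun i => ind (mv d y i k))) by (intros; apply jump_diff).
  replace 1 with (ind (mv d y k k)) by (rewrite mv_refl; auto).
  apply (sm_ge_pt d (fun i => ind (mv d y i k)) k); auto. intros; apply ind_01.
Qed.

Lemma indB_ge d y m : (S m < d)%nat -> gap y m = 0%Z -> indB d y = 1.
Proof.
  intros H Hg. unfold indB. destruct (existsb _ _) eqn:E; auto.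
  assert (existsb (fun i => Z.eqb (gap y i) 0) (seq 0 (d - 1)) = true).
  { apply existsb_exists. exists m. split. apply in_seq. lia. apply Z.eqb_eq; auto. }
  congruence.
Qed.

Lemma indB_01 d y : 0 <= indB d y <= 1.
Proof. unfold indB. destruct (existsb _ _); lra. Qed.

Lemma L3 d y : (2 <= d)%nat -> Lg d (Wf 0) y <= indB d y.
Proof.
  intros Hd. unfold Lg.
  rewrite (sm_ext _ _ (fun i => ind (mv d y i 1) - ind (mv d y i 0))) by (intros; rewrite W_jump; ring).
  rewrite (sm_cut d 2). rewrite !sm_S, sm_0.
  rewrite (mv_gt d y 1 0) by lia. rewrite (mv_refl d y 0) by lia. rewrite (mv_refl d y 1) by lia.
  rewrite mv_next by lia. destruct (Z.eqb (gap y 0) 0) eqn:E.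
  - apply Z.eqb_eq in E. rewrite (indB_ge d y 0) by (auto; lia). simpl. lra.
  - pose proof (indB_01 d y). simpl. lra.
  - intros i Hi. rewrite !mv_gt by lia. simpl. ring.
  - lia.
Qed.

Lemma Lg_W0_pow d y p : (2 <= d)%nat ->
  Lg d (fun y => Wf 0 y ^ p) y =
  (Wf 0 y + ind (Z.eqb (gap y 0) 0) - 1) ^ p - Wf 0 y ^ p + ((Wf 0 y + 1) ^ p - Wf 0 y ^ p).
Proof.
  intros Hd. unfold Lg.
  rewrite (sm_ext _ _ (fun i => (Wf 0 y + ind (mv d y i 1) - ind (mv d y i 0)) ^ p - Wf 0 y ^ p))
    by (intros; rewrite W_jump; ring).
  rewrite (sm_cut d 2). rewrite !sm_S, sm_0.
  rewrite (mv_gt d y 1 0) by lia. rewrite (mv_refl d y 0) by lia. rewrite (mv_refl d y 1) by lia.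
  rewrite mv_next by lia. change (ind true) with 1. change (ind false) with 0.
  replace (Wf 0 y + 1 - 0) with (Wf 0 y + 1) by ring. ring.
  - intros i Hi. rewrite !mv_gt by lia. change (ind false) with 0. replace (Wf 0 y + 0 - 0) with (Wf 0 y) by ring. ring.
  - lia.
Qed.

Lemma L4 d y : (2 <= d)%nat -> 1 <= Lg d (fun y => Wf 0 y ^ 2) y.
Proof.
  intros Hd. rewrite Lg_W0_pow by auto. destruct (Z.eqb (gap y 0) 0) eqn:E; simpl.
  - apply Z.eqb_eq in E. unfold Wf. rewrite E. simpl. lra.
  - nra.
Qed.

Lemma L5 d y : (2 <= d)%nat -> Lg d (fun y => Wf 0 y ^ 4) y <= 12 * Wf 0 y ^ 2 + 2.
Proof.
  intros Hd. rewrite Lg_W0_pow by auto. destruct (Z.eqb (gap y 0) 0) eqn:E; simpl.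
  - apply Z.eqb_eq in E. unfold Wf. rewrite E. simpl. lra.
  - nra.
Qed.

Lemma valid_chain d y i j : valid d y -> (i <= j)%nat -> (j < d)%nat -> (Z.of_nat (j - i) <= y j - y i)%Z.
Proof.
  intros Hv Hij Hj. induction j.
  - assert (i = 0%nat) by lia. subst. simpl. lia.
  - destruct (Nat.eq_dec i (S j)) as [->|Hne].
    + rewrite Nat.sub_diag. simpl. lia.
    + specialize (IHj ltac:(lia) ltac:(lia)). specialize (Hv j Hj). lia.
Qed.

Lemma L6 d y m : valid d y -> (S m < d)%nat -> Lg d (fun y => Wf m y ^ 2) y <= 2.
Proof.
  intros Hv Hm. unfold Lg.
  set (W := Wf m y).
  assert (HW : 0 <= W). { unfold W, Wf, gap. specialize (Hv m Hm). apply IZR_le. lia. }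
  rewrite (sm_ext _ _ (fun i => (W + ind (mv d y i (S m)) - ind (mv d y i m)) ^ 2 - W ^ 2))
    by (intros; unfold W; rewrite W_jump; ring).
  rewrite (sm_cut d (S (S m))). rewrite !sm_S.
  rewrite (mv_gt d y (S m) m) by lia. rewrite (mv_refl d y m) by lia. rewrite (mv_refl d y (S m)) by lia.
  rewrite mv_next by lia.
  assert (Hs : sm m (fun i => (W + ind (mv d y i (S m)) - ind (mv d y i m)) ^ 2 - W ^ 2) <= 0).
  { replace 0 with (sm m (fun _ => 0)) by (rewrite sm_const; ring). apply sm_le. intros i Hi.
    destruct (mv d y i (S m)) eqn:E1, (mv d y i m) eqn:E2; simpl; try lra.
    -
      exfalso. apply mv_spec in E1. destruct E1 as [H1 [H2 H3]].
      pose proof (valid_chain d y i m Hv ltac:(lia) ltac:(lia)).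
      pose proof (Hv m Hm).
      assert (mv d y i m = true) by (apply mv_spec; repeat split; lia). congruence.
    - (* moves m not S m: W >= 1 *)
      assert (W >= 1).
      { unfold W, Wf. apply mv_spec in E2. destruct E2 as [H1 [H2 H3]].
        destruct (Z.eq_dec (gap y m) 0) as [Hg|Hg].
        - unfold gap in Hg. assert (mv d y i (S m) = true) by (apply mv_spec; repeat split; lia). congruence.
        - apply Rle_ge, IZR_le. unfold gap in *. specialize (Hv m Hm). lia. }
      nra. }
  destruct (Z.eqb (gap y m) 0) eqn:E; simpl in *.
  - apply Z.eqb_eq in E. assert (W = 0) by (unfold W, Wf; rewrite E; reflexivity). rewrite H in *. match type of Hs with ?a <= _ => set (S0 := a) in * end. lra.
  - nra.
  - intros i Hi. rewrite !mv_gt by lia. simpl. ring.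
  - lia.
Qed.

Definition Phi (d : nat) (y : config) : R := sm d (fun k => posn k y).

Lemma L7 d y : (0 < d)%nat -> INR d + indB d y <= Lg d (Phi d) y.
Proof.
  intros Hd. unfold Lg, Phi.
  rewrite (sm_ext _ _ (fun i => sm d (fun k => ind (mv d y i k)))).
  2:{ intros i Hi. transitivity (sm d (fun k => posn k (jump d y i) + (-1) * posn k y)).
      rewrite sm_plus, sm_scal. ring. apply sm_ext. intros k Hk.
      unfold posn. rewrite <- jump_diff. ring. }
  assert (H1 : forall i, (i < d)%nat -> 1 <= sm d (fun k => ind (mv d y i k))).
  { intros i Hi. replace 1 with (ind (mv d y i i)) by (rewrite mv_refl; auto).
    apply (sm_ge_pt d (fun k => ind (mv d y i k)) i); auto. intros; apply ind_01. }
  unfold indB. destruct (existsb _ _) eqn:E.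
  - apply existsb_exists in E. destruct E as [m [Hm Hg]]. apply in_seq in Hm. apply Z.eqb_eq in Hg.
    apply sm_ge_plus1 with m; auto. lia.
    replace 2 with (ind (mv d y m m) + ind (mv d y m (S m))).
    apply (sm_ge_2 d (fun k => ind (mv d y m k)) m). intros; apply ind_01. lia.
    rewrite mv_refl by lia. rewrite mv_next by lia. rewrite Hg. simpl. ring.
  - replace (INR d + 0) with (sm d (fun _ => 1)) by (rewrite sm_const; ring).
    apply sm_le. auto.
Qed.


Lemma E_ext d x0 f g t : (forall y, f y = g y) -> E d x0 f t = E d x0 g t.
Proof. intros H. unfold E. apply Fp_ext. intros; apply es_ext; auto. Qed.

Lemma GA_ext d x0 f g : (forall y, f y = g y) -> GA d x0 f -> GA d x0 g.
Proof. intros H. unfold GA. apply Gr_ext. intros; apply es_ext; auto. Qed.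

Lemma Lg_lin d f g c y : Lg d (fun y => f y + c * g y) y = Lg d f y + c * Lg d g y.
Proof.
  unfold Lg. rewrite <- sm_scal, <- sm_plus. apply sm_ext. intros; ring.
Qed.

Lemma GrF_posn x0 k : GrF x0 (posn k).
Proof. apply GrF_pos. Qed.

Lemma GrF_W x0 m : GrF x0 (Wf m).
Proof.
  apply (GrF_ext x0 (fun y => posn (S m) y + (-1) * posn m y + (-1))).
  - intros y. unfold Wf, posn, gap. rewrite !minus_IZR. ring.
  - apply GrF_plus. apply GrF_plus. apply GrF_pos. apply GrF_mult. apply GrF_const. apply GrF_pos.
    apply GrF_const.
Qed.

Lemma GrF_W2 x0 m : GrF x0 (fun y => Wf m y ^ 2).
Proof.
  apply (GrF_ext x0 (fun y => Wf m y * Wf m y)). intros; ring.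
  apply GrF_mult; apply GrF_W.
Qed.

Lemma GrF_W4 x0 m : GrF x0 (fun y => Wf m y ^ 4).
Proof.
  apply (GrF_ext x0 (fun y => Wf m y ^ 2 * Wf m y ^ 2)). intros; ring.
  apply GrF_mult; apply GrF_W2.
Qed.

Lemma GrF_sm x0 j : GrF x0 (fun y => sm j (fun k => posn k y)).
Proof.
  induction j.
  - apply (GrF_ext x0 (fun _ => 0)). intros; reflexivity. apply GrF_const.
  - apply (GrF_ext x0 (fun y => sm j (fun k => posn k y) + posn j y)). intros; rewrite sm_S; reflexivity.
    apply GrF_plus; auto. apply GrF_pos.
Qed.

Lemma GrF_indB x0 d : GrF x0 (indB d).
Proof.
  exists 1, 1. split. lra. intros n y _. rewrite pow1. pose proof (indB_01 d y).
  rewrite Rabs_right; lra.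
Qed.

Lemma GrF_diff x0 f g : GrF x0 f -> GrF x0 g -> GrF x0 (fun y => f y - g y).
Proof.
  intros Hf Hg. apply (GrF_ext x0 (fun y => f y + (-1) * g y)). intros; ring.
  apply GrF_plus; auto. apply GrF_mult; auto. apply GrF_const.
Qed.

Ltac ga := repeat first [ apply GA_F; [lia|] | apply GrF_diff | apply GrF_plus | apply GrF_mult
  | apply GrF_const | apply GrF_posn | apply GrF_pos | apply GrF_W | apply GrF_W2 | apply GrF_W4 | apply GrF_sm | apply GrF_indB ].

Ltac gaa := apply GA_F; [lia|]; ga.

Lemma E_minus d x0 f g t : GA d x0 f -> GA d x0 g -> E d x0 (fun y => f y - g y) t = E d x0 f t - E d x0 g t.
Proof.
  intros Hf Hg. rewrite (E_ext d x0 _ (fun y => f y + (-1) * g y)) by (intros; ring).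
  rewrite E_plus, E_scal. ring. auto. apply GA_scal; auto.
Qed.


Lemma R1 d x0 T : (2 <= d)%nat -> valid d x0 -> 0 <= T -> E d x0 (posn 0) T = IZR (x0 0%nat) + T.
Proof.
  intros Hd Hv HT.
  pose proof (E_grow_le d x0 (posn 0) 1 T ltac:(lia) ltac:(ga) Hv HT (fun y _ => Req_le _ _ (L1 d y ltac:(lia)))).
  pose proof (E_grow_ge d x0 (posn 0) 1 T ltac:(lia) ltac:(ga) Hv HT (fun y _ => Req_le _ _ (eq_sym (L1 d y ltac:(lia))))).
  unfold posn in *. lra.
Qed.

Lemma R2 d x0 k T : (2 <= d)%nat -> valid d x0 -> 0 <= T -> (k < d)%nat -> IZR (x0 k) + T <= E d x0 (posn k) T.
Proof.
  intros Hd Hv HT Hk.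
  pose proof (E_grow_ge d x0 (posn k) 1 T ltac:(lia) ltac:(ga) Hv HT (fun y _ => L2 d y k Hk)).
  unfold posn in *. lra.
Qed.

Lemma R3 d x0 m T : (2 <= d)%nat -> valid d x0 -> 0 <= T -> (S m < d)%nat ->
  E d x0 (fun y => Wf m y ^ 2) T <= Wf m x0 ^ 2 + 2 * T.
Proof.
  intros Hd Hv HT Hm.
  apply (E_grow_le d x0 (fun y => Wf m y ^ 2) 2 T ltac:(lia) ltac:(ga) Hv HT).
  intros y Hy. apply L6; auto.
Qed.

Lemma R4 d x0 m T : (2 <= d)%nat -> valid d x0 -> 0 <= T -> (S m < d)%nat ->
  E d x0 (Wf m) T <= (Rabs (Wf m x0) + 2) * sqrt (T + 1).
Proof.
  intros Hd Hv HT Hm. set (w := Wf m x0).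
  set (a := sqrt (w ^ 2 + 2 * T + 1)).
  assert (Ha : 0 < a). { apply sqrt_lt_R0. pose proof (pow2_ge_0 w). lra. }
  assert (Ha2 : a * a = w ^ 2 + 2 * T + 1). { apply sqrt_sqrt. pose proof (pow2_ge_0 w). lra. }
  assert (E d x0 (Wf m) T <= E d x0 (fun y => / (2 * a) * (Wf m y ^ 2) + a / 2) T).
  { apply E_le; auto. lia. ga. apply GA_plus. apply GA_scal. ga. apply GA_const; lia.
    intros y _. assert (0 <= (Wf m y - a) ^ 2 / (2 * a)).
    { apply Rmult_le_pos. apply pow2_ge_0. apply Rlt_le, Rinv_0_lt_compat; lra. }
    replace (/ (2 * a) * Wf m y ^ 2 + a / 2) with ((Wf m y - a) ^ 2 / (2 * a) + Wf m y)
      by (field; lra). lra. }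
  rewrite E_plus, E_scal, E_const in H by (try apply GA_scal; try apply GA_const; try ga; lia).
  pose proof (R3 d x0 m T Hd Hv HT Hm). fold w in H0.
  assert (E d x0 (Wf m) T <= a).
  { eapply Rle_trans. apply H.
    assert (/ (2 * a) * E d x0 (fun y => Wf m y ^ 2) T <= / (2 * a) * (w ^ 2 + 2 * T)).
    { apply Rmult_le_compat_l. apply Rlt_le, Rinv_0_lt_compat; lra. auto. }
    assert (/ (2 * a) * (w ^ 2 + 2 * T) + a / 2 <= a).
    { replace (w ^ 2 + 2 * T) with (a * a - 1) by lra.
      assert (0 < / (2 * a)) by (apply Rinv_0_lt_compat; lra).
      replace (/ (2 * a) * (a * a - 1) + a / 2) with (a - / (2 * a)) by (field; lra). lra. }
    lra. }
  eapply Rle_trans. apply H1. unfold a.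
  rewrite <- (sqrt_square (Rabs w + 2)) by (pose proof (Rabs_pos w); lra).
  rewrite <- sqrt_mult_alt by (pose proof (Rabs_pos w); nra).
  apply sqrt_le_1_alt.
  pose proof (Rabs_pos w). assert (w ^ 2 = Rabs w * Rabs w) by (rewrite <- Rabs_mult; simpl; rewrite Rmult_1_r; rewrite Rabs_right; [ring| apply Rle_ge; nra]).
  nra.
Qed.

Lemma sqrt1_ge T : 0 <= T -> 1 <= sqrt (T + 1).
Proof. intros HT. pose proof (sqrt_le_1_alt 1 (T+1) ltac:(lra)) as H. rewrite sqrt_1 in H. exact H. Qed.

Lemma R5 d x0 k : (2 <= d)%nat -> valid d x0 -> (k < d)%nat ->
  exists C, 0 <= C /\ forall T, 0 <= T -> E d x0 (fun y => posn k y - posn 0 y) T <= C * sqrt (T + 1).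
Proof.
  intros Hd Hv. induction k; intros Hk.
  - exists 0. split. lra. intros T HT. rewrite (E_ext d x0 _ (fun _ => 0)) by (intros; ring).
    rewrite E_const by lia. lra.
  - destruct (IHk ltac:(lia)) as [C [HC H]].
    exists (C + (Rabs (Wf k x0) + 2) + 1). split. pose proof (Rabs_pos (Wf k x0)). lra.
    intros T HT.
    rewrite (E_ext d x0 _ (fun y => (posn k y - posn 0 y) + (Wf k y + 1))).
    2:{ intros y. unfold posn, Wf, gap. rewrite !minus_IZR. ring. }
    rewrite E_plus by gaa.
    rewrite E_plus by gaa.
    rewrite E_const by lia.
    pose proof (H T HT). pose proof (R4 d x0 k T Hd Hv HT Hk). pose proof (sqrt1_ge T HT).
    lra.
Qed.

Lemma sqrt_T1 T : 1 <= T -> sqrt (T + 1) <= sqrt 2 * sqrt T.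
Proof.
  intros HT. rewrite <- sqrt_mult by lra. apply sqrt_le_1_alt. lra.
Qed.

Lemma disp_E d T x0 k : expected_displacement d T x0 k = E d x0 (fun x => IZR (x k - x0 k)) T.
Proof. reflexivity. Qed.

Lemma R6 d x0 k : (2 <= d)%nat -> valid d x0 -> (k < d)%nat ->
  exists C T0, forall T, T0 <= T -> Rabs (expected_displacement d T x0 k - T) <= C * sqrt T.
Proof.
  intros Hd Hv Hk. destruct (R5 d x0 k Hd Hv Hk) as [C [HC H]].
  set (D := Rabs (IZR (x0 0%nat) - IZR (x0 k))).
  exists ((C + D) * sqrt 2), 1. intros T HT.
  rewrite disp_E.
  rewrite (E_ext d x0 _ (fun y => posn k y + (- IZR (x0 k)))) by (intros; unfold posn; rewrite minus_IZR; ring).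
  rewrite E_plus by gaa. rewrite E_const by lia.
  assert (Ek : E d x0 (posn k) T = E d x0 (fun y => posn k y - posn 0 y) T + E d x0 (posn 0) T).
  { rewrite <- E_plus by gaa. apply E_ext. intros; ring. }
  pose proof (H T ltac:(lra)). pose proof (R1 d x0 T Hd Hv ltac:(lra)).
  pose proof (R2 d x0 k T Hd Hv ltac:(lra) Hk).
  pose proof (sqrt_T1 T HT). pose proof (sqrt1_ge T ltac:(lra)).
  assert (0 <= D) by apply Rabs_pos. pose proof (Rle_abs (IZR (x0 0%nat) - IZR (x0 k))) as HD. fold D in HD.
  rewrite Rabs_right by lra.
  assert (Hm : E d x0 (posn k) T + - IZR (x0 k) - T <= (C + D) * sqrt (T + 1)).
  { rewrite Rmult_plus_distr_r. assert (D * 1 <= D * sqrt (T + 1)) by (apply Rmult_le_compat_l; lra). lra. }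
  eapply Rle_trans. apply Hm. rewrite Rmult_assoc. apply Rmult_le_compat_l. lra. auto.
Qed.

Lemma R7 d x0 j : (2 <= d)%nat -> valid d x0 -> (j <= d)%nat ->
  exists C, 0 <= C /\ forall T, 0 <= T -> E d x0 (fun y => sm j (fun k => posn k y)) T <= INR j * T + C * sqrt (T + 1).
Proof.
  intros Hd Hv. induction j; intros Hj.
  - exists 0. split. lra. intros T HT. rewrite (E_ext d x0 _ (fun _ => 0)) by (intros; reflexivity).
    rewrite E_const by lia. simpl. lra.
  - destruct (IHj ltac:(lia)) as [C [HC H]].
    destruct (R5 d x0 j Hd Hv ltac:(lia)) as [Cj [HCj Hj']].
    exists (C + Cj + Rabs (IZR (x0 0%nat))). split. pose proof (Rabs_pos (IZR (x0 0%nat))). lra.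
    intros T HT.
    rewrite (E_ext d x0 _ (fun y => sm j (fun k => posn k y) + ((posn j y - posn 0 y) + posn 0 y))).
    2:{ intros y. rewrite sm_S. ring. }
    rewrite E_plus by gaa. rewrite E_plus by gaa.
    pose proof (H T HT). pose proof (Hj' T HT). pose proof (R1 d x0 T Hd Hv HT).
    pose proof (sqrt1_ge T HT). pose proof (Rle_abs (IZR (x0 0%nat))).
    assert (Rabs (IZR (x0 0%nat)) * 1 <= Rabs (IZR (x0 0%nat)) * sqrt (T + 1))
      by (apply Rmult_le_compat_l; [apply Rabs_pos|lra]).
    rewrite S_INR. rewrite !Rmult_plus_distr_r. lra.
Qed.

Lemma occ_E d T x0 : expected_occupation d T x0 = RInt (fun s => E d x0 (indB d) s) 0 T.
Proof. reflexivity. Qed.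

Lemma RInt_E_le d x0 f g T : (2 <= d)%nat -> valid d x0 -> 0 <= T -> GA d x0 f -> GA d x0 g ->
  (forall y, valid d y -> f y <= g y) ->
  RInt (fun s => E d x0 f s) 0 T <= RInt (fun s => E d x0 g s) 0 T.
Proof.
  intros Hd Hv HT Hf Hg H. apply RInt_le; auto.
  - apply (@ex_RInt_continuous R_CompleteNormedModule). intros; apply E_cont; auto.
  - apply (@ex_RInt_continuous R_CompleteNormedModule). intros; apply E_cont; auto.
  - intros x Hx. apply E_le; auto. lia. lra.
Qed.

Lemma RInt_E_L d x0 f T : (2 <= d)%nat -> 0 <= T -> GA d x0 f ->
  RInt (fun s => E d x0 (Lg d f) s) 0 T = E d x0 f T - f x0.
Proof.
  intros Hd HT Hf. rewrite <- (E_0 d x0 f). apply RInt_deriv; auto.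
  - intros t. apply E_deriv; auto. lia.
  - intros t. apply E_cont. apply GA_L; auto. lia.
Qed.

Lemma Occ_upper d x0 : (2 <= d)%nat -> valid d x0 ->
  exists C, 0 < C /\ forall T, 1 <= T -> expected_occupation d T x0 <= C * sqrt T.
Proof.
  intros Hd Hv. destruct (R7 d x0 d Hd Hv (le_n d)) as [C [HC H]].
  set (Psi := fun y => Phi d y + (- INR d) * posn 0 y).
  assert (GPsi : GA d x0 Psi). { unfold Psi, Phi. gaa. }
  set (D := Rabs (- INR d * IZR (x0 0%nat) - Psi x0)).
  exists ((C + D) * sqrt 2 + 1). split.
  { assert (0 <= D) by apply Rabs_pos. pose proof (sqrt_pos 2). nra. }
  intros T HT. rewrite occ_E.
  eapply Rle_trans. apply (RInt_E_le d x0 (indB d) (Lg d Psi) T Hd Hv ltac:(lra)).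
  gaa. apply GA_L. lia. auto.
  { intros y _. unfold Psi. rewrite Lg_lin. rewrite L1 by lia. pose proof (L7 d y ltac:(lia)). lra. }
  rewrite RInt_E_L by (auto; lra).
  assert (EP : E d x0 Psi T = E d x0 (Phi d) T + (- INR d) * E d x0 (posn 0) T).
  { unfold Psi. rewrite E_plus, E_scal. reflexivity. unfold Phi; gaa. apply GA_scal. gaa. }
  pose proof (H T ltac:(lra)). pose proof (R1 d x0 T Hd Hv ltac:(lra)).
  assert (E d x0 Psi T - Psi x0 <= C * sqrt (T + 1) + D).
  { rewrite EP. unfold Phi. rewrite H1. pose proof (Rle_abs (- INR d * IZR (x0 0%nat) - Psi x0)).
    fold D in H2. lra. }
  pose proof (sqrt_T1 T HT). pose proof (sqrt1_ge T ltac:(lra)).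
  assert (0 <= D) by apply Rabs_pos.
  assert (D * 1 <= D * sqrt (T + 1)) by (apply Rmult_le_compat_l; lra).
  assert ((C + D) * sqrt (T + 1) <= (C + D) * (sqrt 2 * sqrt T)) by (apply Rmult_le_compat_l; lra).
  pose proof (sqrt_pos T).
  nra.
Qed.

Lemma R9 d x0 T : (2 <= d)%nat -> valid d x0 -> 0 <= T ->
  E d x0 (fun y => Wf 0 y ^ 4) T <= Wf 0 x0 ^ 4 + (12 * Wf 0 x0 ^ 2 + 2) * T + 12 * T ^ 2.
Proof.
  intros Hd Hv HT. set (w := Wf 0 x0). set (c := 12 * w ^ 2 + 2).
  pose proof (deriv_nonpos (fun t => E d x0 (fun y => Wf 0 y ^ 4) t - c * t - 12 * t ^ 2)
     (fun t => E d x0 (Lg d (fun y => Wf 0 y ^ 4)) t - c - 24 * t) T HT) as K.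
  assert (HD : forall t, is_derive (fun t => E d x0 (fun y => Wf 0 y ^ 4) t - c * t - 12 * t ^ 2) t
      (E d x0 (Lg d (fun y => Wf 0 y ^ 4)) t - c - 24 * t)).
  { intros t. apply (is_derive_minus _ (fun t => 12 * t ^ 2)).
    apply (is_derive_minus _ (fun t => c * t)). apply E_deriv. lia. gaa.
    auto_derive; auto. ring. auto_derive; auto. ring. }
  assert (HB : forall t, 0 <= t <= T -> E d x0 (Lg d (fun y => Wf 0 y ^ 4)) t - c - 24 * t <= 0).
  { intros t Ht.
    assert (E d x0 (Lg d (fun y => Wf 0 y ^ 4)) t <= E d x0 (fun y => 12 * Wf 0 y ^ 2 + 2 * 1) t).
    { apply E_le; [lia| apply GA_L; [lia|gaa] | gaa | intros y _; pose proof (L5 d y Hd); lra | auto | lra]. }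
    rewrite E_plus in H by (apply GA_scal; gaa). rewrite !E_scal in H. rewrite E_const in H by lia.
    pose proof (R3 d x0 0 t Hd Hv ltac:(lra) ltac:(lia)). fold w in H0. unfold c. lra. }
  pose proof (K HD HB) as Hf. cbv beta in Hf. rewrite E_0 in Hf. fold w in Hf.
  replace (w ^ 4 - c * 0 - 12 * 0 ^ 2) with (w ^ 4) in Hf by ring.
  lra.
Qed.

Lemma W_lower a W : 0 < a -> 0 <= W -> 3 / (2 * a) * W ^ 2 + (- / (2 * a ^ 3)) * W ^ 4 <= W.
Proof.
  intros Ha HW.
  assert (0 <= W * (W - a) ^ 2 * (W + 2 * a)).
  { apply Rmult_le_pos. apply Rmult_le_pos; auto. apply pow2_ge_0. lra. }
  assert (0 < 2 * a ^ 3) by (apply Rmult_lt_0_compat; [lra|apply pow_lt; auto]).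
  apply (Rmult_le_reg_l (2 * a ^ 3)); auto.
  replace (2 * a ^ 3 * (3 / (2 * a) * W ^ 2 + - / (2 * a ^ 3) * W ^ 4)) with (3 * a ^ 2 * W ^ 2 - W ^ 4)
    by (field; lra).
  nra.
Qed.

Lemma R10 d x0 T : (2 <= d)%nat -> valid d x0 -> 1 <= T ->
  sqrt T / sqrt (Wf 0 x0 ^ 4 + 12 * Wf 0 x0 ^ 2 + 14) <= E d x0 (Wf 0) T.
Proof.
  intros Hd Hv HT. set (w := Wf 0 x0). set (Q := w ^ 4 + 12 * w ^ 2 + 14).
  assert (HQ : 0 < Q) by (unfold Q; pose proof (pow2_ge_0 w); pose proof (pow2_ge_0 (w^2));
     replace (w ^ 4) with ((w^2)^2) by ring; lra).
  set (K := sqrt Q). set (s := sqrt T).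
  assert (HK : 0 < K) by (apply sqrt_lt_R0; auto).
  assert (HKK : K * K = Q) by (apply sqrt_sqrt; lra).
  assert (Hs : 1 <= s). { unfold s. rewrite <- sqrt_1. apply sqrt_le_1_alt. lra. }
  assert (Hss : s * s = T) by (apply sqrt_sqrt; lra).
  set (a := K * s). assert (Ha : 0 < a) by (unfold a; nra).
  assert (H1 : E d x0 (fun y => 3 / (2 * a) * Wf 0 y ^ 2 + (- / (2 * a ^ 3)) * Wf 0 y ^ 4) T <= E d x0 (Wf 0) T).
  { apply E_le; [lia| | gaa | | auto | lra].
    apply GA_plus; apply GA_scal; gaa.
    intros y Hy. apply W_lower; auto. unfold Wf, gap. specialize (Hy 0%nat ltac:(lia)). apply IZR_le. lia. }
  rewrite E_plus, !E_scal in H1 by (apply GA_scal; gaa).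
  pose proof (R9 d x0 T Hd Hv ltac:(lra)) as H4. fold w in H4.
  pose proof (E_grow_ge d x0 (fun y => Wf 0 y ^ 2) 1 T ltac:(lia) ltac:(gaa) Hv ltac:(lra)
      (fun y _ => L4 d y Hd)) as H2. cbv beta in H2. fold w in H2.
  assert (HB4 : w ^ 4 + (12 * w ^ 2 + 2) * T + 12 * T ^ 2 <= Q * T ^ 2).
  { unfold Q. pose proof (pow2_ge_0 w). pose proof (pow2_ge_0 (w^2)).
    replace (w ^ 4) with ((w^2)^2) by ring.
    assert (T <= T ^ 2) by nra. assert (1 <= T ^ 2) by nra. nra. }
  assert (Hc1 : 0 < 3 / (2 * a)) by (apply Rdiv_lt_0_compat; lra).
  assert (Hc2 : 0 < / (2 * a ^ 3)) by (apply Rinv_0_lt_compat; apply Rmult_lt_0_compat; [lra|apply pow_lt; auto]).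
  assert (E d x0 (Wf 0) T >= 3 / (2 * a) * T - / (2 * a ^ 3) * (Q * T ^ 2)).
  { pose proof (pow2_ge_0 w).
    assert (3 / (2 * a) * T <= 3 / (2 * a) * E d x0 (fun y => Wf 0 y ^ 2) T) by (apply Rmult_le_compat_l; lra).
    assert (/ (2 * a ^ 3) * E d x0 (fun y => Wf 0 y ^ 4) T <= / (2 * a ^ 3) * (Q * T ^ 2))
      by (apply Rmult_le_compat_l; lra).
    lra. }
  replace (3 / (2 * a) * T - / (2 * a ^ 3) * (Q * T ^ 2)) with (s / K) in H.
  fold K. fold s. lra.
  unfold a. rewrite <- Hss, <- HKK. field. lra.
Qed.

Lemma Occ_lower d x0 : (2 <= d)%nat -> valid d x0 ->
  exists c T0, 0 < c /\ 1 <= T0 /\ forall T, T0 <= T -> c * sqrt T <= expected_occupation d T x0.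
Proof.
  intros Hd Hv. set (w := Wf 0 x0). set (K := sqrt (w ^ 4 + 12 * w ^ 2 + 14)).
  assert (Hw : 0 <= w). { unfold w, Wf, gap. specialize (Hv 0%nat ltac:(lia)). apply IZR_le. lia. }
  assert (HK : 0 < K).
  { apply sqrt_lt_R0. pose proof (pow2_ge_0 w). pose proof (pow2_ge_0 (w^2)).
    replace (w ^ 4) with ((w^2)^2) by ring. lra. }
  exists (/ (2 * K)), (Rmax 1 ((2 * K * w) ^ 2)). split. apply Rinv_0_lt_compat; lra.
  split. apply Rmax_l.
  intros T HT. assert (HT1 : 1 <= T) by (eapply Rle_trans; [apply Rmax_l|exact HT]).
  assert (HT2 : (2 * K * w) ^ 2 <= T) by (eapply Rle_trans; [apply Rmax_r|exact HT]).
  rewrite occ_E.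
  eapply Rle_trans.
  2:{ apply (RInt_E_le d x0 (Lg d (Wf 0)) (indB d) T Hd Hv ltac:(lra)).
      apply GA_L. lia. gaa. gaa. intros y _. apply L3; auto. }
  rewrite RInt_E_L by (auto; try lra; gaa).
  pose proof (R10 d x0 T Hd Hv HT1) as H. fold w K in H.
  assert (Hs : 2 * K * w <= sqrt T).
  { rewrite <- (sqrt_pow2 (2 * K * w)) by nra. apply sqrt_le_1_alt. auto. }
  assert (w <= sqrt T / (2 * K)).
  { apply (Rmult_le_reg_l (2 * K)). lra. field_simplify. lra. lra. }
  assert (E1 : sqrt T / K = 2 * (sqrt T / (2 * K))) by (field; lra).
  assert (E2 : / (2 * K) * sqrt T = sqrt T / (2 * K)) by (unfold Rdiv; ring).
  rewrite E2. rewrite E1 in H. set (v := sqrt T / (2 * K)) in *. fold w. lra.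
Qed.

Lemma Occ d x0 : (2 <= d)%nat -> valid d x0 ->
  exists c1 c2 T0 : R, 0 < c1 /\ 0 < c2 /\
     forall T : R, T0 <= T ->
       c1 * sqrt T <= expected_occupation d T x0 <= c2 * sqrt T.
Proof.
  intros Hd Hv. destruct (Occ_lower d x0 Hd Hv) as [c [T0 [Hc [HT0 H1]]]].
  destruct (Occ_upper d x0 Hd Hv) as [C [HC H2]].
  exists c, C, T0. split; auto. split; auto. intros T HT. split. auto. apply H2. lra.
Qed.


Theorem theorem2p4 (d : nat) (x0 : config) :
  (2 <= d)%nat ->
  (forall k : nat, (S k < d)%nat -> (x0 k < x0 (S k))%Z) ->
  (exists c1 c2 T0 : R, 0 < c1 /\ 0 < c2 /\
     forall T : R, T0 <= T ->
       c1 * sqrt T <= expected_occupation d T x0 <= c2 * sqrt T)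
  /\
  (forall i : nat, (i < d)%nat ->
     exists C T0 : R, forall T : R, T0 <= T ->
       Rabs (expected_displacement d T x0 i - T) <= C * sqrt T).
Proof.
  intros Hd Hv. split.
  - apply Occ; auto.
  - intros i Hi. apply R6; auto.
Qed.
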